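(* There is an absolute constant $K$ such that, for every $0<\epsilon<1$, over any sequence of soft sequence heap operations containing $N$ insertions, the sum over all sequences ever created (by insertion or by merging, after the possible application of $\mathrm{reduce}$) of their lengths at creation is at most $K\cdot N\lg\frac1\epsilon$ (for $\epsilon\le 1/2$; in general $O(N(1+\lg\frac1\epsilon))$).
   Context: Soft sequence heap with error parameter $0<\epsilon<1$ and $r_0=\lceil \lg(1/\epsilon)\rceil$ ($\lg$ = binary logarithm). The heap stores a list of nonempty sequences of items, each sorted increasingly by key and having a nonnegative integer rank. The operation $\mathrm{reduce}(L)$ on a sorted sequence $L=e_1,\dots,e_m$ removes $e_{2i}$ from $L$ for every $1\le i<m/2$, so the result has $\lceil (m+1)/2\rceil$ items. Each insertion creates one new sequence of rank $0$ containing the inserted item. A sequence of rank $r+1$ is created only by merging (sorted union) two existing sequences of rank $r$, which are thereby destroyed; if $r+1>r_0$ and $r+1-r_0$ is even, $\mathrm{reduce}$ is then applied to the result. Insertions and melds (which combine the sequence lists of two heaps) perform such merges while two sequences have equal rank; extract-min operations only remove items from sequences. *)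

(* Defs.v *)
From Stdlib Require Import Reals.
From mathcomp Require Import all_boot.
Set Implicit Arguments. Unset Strict Implicit. Unset Printing Implicit Defensive.

Definition lg (x : R) : R := Rdiv (ln x) (ln 2).

Definition ceilR (x : R) : Z := (- Int_part (- x))%Z.

(* r_0 = ceil(lg(1/eps)) (a natural number, since 0 < eps < 1). *)
Definition r0_of (eps : R) : nat := Z.to_nat (ceilR (lg (Rinv eps))).

(* reduce(L) on a sorted sequence of m items leaves ceil((m+1)/2) items;
   ceil((m+1)/2) = floor((m+2)/2). *)
Definition reduce_len (m : nat) : nat := (m.+2)./2.

(* Length of a freshly created sequence of rank r' obtained by merging
   sequences of total length m: reduce is applied iff r' > r0 and r' - r0
   is even. *)
Definition created_len (r0 r' m : nat) : nat :=
  if (r0 < r') && ~~ odd (r' - r0) then reduce_len m else m.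

(* Abstract state: the pool of all sequences currently present (in all
   heaps), each recorded as (rank, current length); lengths are >= 1. *)
Definition pool := seq (nat * nat).

(* One elementary step: [step r0 s t n c] means pool s becomes pool t,
   performing n insertions and creating sequences of total length c. *)
Inductive step (r0 : nat) : pool -> pool -> nat -> nat -> Prop :=
| StepInsert (s : pool) :
    step r0 s ((0, 1) :: s) 1 1
| StepMerge (s rest : pool) (r l1 l2 : nat) :
    perm_eq s ((r, l1) :: (r, l2) :: rest) ->
    step r0 s ((r.+1, created_len r0 r.+1 (l1 + l2)) :: rest) 0
         (created_len r0 r.+1 (l1 + l2))
| StepRemove (s rest : pool) (r l : nat) :
    perm_eq s ((r, l.+1) :: rest) ->
    step r0 s (if l == 0 then rest else (r, l) :: rest) 0 0.

(* [exec r0 s N C]: starting from no sequences, a run of operations reaches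
   pool s with N insertions in total and total creation length C. *)
Inductive exec (r0 : nat) : pool -> nat -> nat -> Prop :=
| ExecNil : exec r0 [::] 0 0
| ExecStep (s t : pool) (N C n c : nat) :
    exec r0 s N C -> step r0 s t n c -> exec r0 t (N + n) (C + c).

(* Main.v *)
Require Import Defs.
From mathcomp Require Import all_boot zify.
Set Implicit Arguments. Unset Strict Implicit. Unset Printing Implicit Defensive.

Fixpoint Fb (r0 r : nat) : nat :=
  match r with 0 => 1 | r'.+1 => created_len r0 r (2 * Fb r0 r') end.

Definition Pt (r0 r : nat) : nat :=
  if r <= r0 then 2 ^ r * (r0 - r + 6)
  else (if odd (r - r0) then 4 else 3) * 2 ^ ((r - r0)./2) * (2 ^ r0 + 1).

Lemma Fb_low r0 r : r <= r0 -> Fb r0 r = 2 ^ r.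
Proof.
elim: r => [//|r IH] H /=.
rewrite /created_len IH; last by lia.
have -> : (r0 < r.+1) = false by lia.
by rewrite /= expnS.
Qed.

Lemma Fb_S r0 r : Fb r0 r.+1 = created_len r0 r.+1 (2 * Fb r0 r).
Proof. by []. Qed.

Lemma Fb_high r0 k :
  Fb r0 (r0 + k.*2) + 1 = 2 ^ k * (2 ^ r0 + 1) /\
  Fb r0 (r0 + k.*2).+1 + 2 = 2 ^ k.+1 * (2 ^ r0 + 1).
Proof.
elim: k => [|k [IH1 IH2]].
  rewrite addn0 Fb_low // /= /created_len Fb_low // ltnSn subSn // subnn /=.
  rewrite expn0 expn1; lia.
have E1 : (r0 + k.+1.*2) = (r0 + k.*2).+1.+1 by rewrite doubleS !addnS.
have E2 : ~~ odd ((r0 + k.*2).+2 - r0) = true.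
  by rewrite -!addnS addKn /= ?negbK odd_double.
have E3 : ~~ odd ((r0 + k.*2).+3 - r0) = false.
  by rewrite -!addnS addKn /= ?negbK odd_double.
have A : Fb r0 (r0 + k.+1.*2) + 1 = 2 ^ k.+1 * (2 ^ r0 + 1).
  rewrite E1 Fb_S /created_len E2 andbT /reduce_len.
  have -> : (2 * Fb r0 (r0 + k.*2).+1).+2 = (Fb r0 (r0 + k.*2).+1).+1.*2.
    by rewrite -mul2n; lia.
  have -> : (r0 < (r0 + k.*2).+2) = true by lia.
  lia.
split => //.
rewrite E1 Fb_S /created_len E3 andbF.
move: A; rewrite E1 !expnS; lia.
Qed.

Lemma Pt_hi r0 x : 0 < x ->
  Pt r0 (r0 + x) = (if odd x then 4 else 3) * 2 ^ (x./2) * (2 ^ r0 + 1).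
Proof.
move=> H; rewrite /Pt.
have -> : (r0 + x <= r0) = false by lia.
by rewrite addKn.
Qed.

Lemma O1 k : odd (k.*2.+1) = true. Proof. by rewrite /= odd_double. Qed.
Lemma H1 k : (k.*2.+1)./2 = k. Proof. by rewrite /= uphalf_double. Qed.

Lemma key r0 r : Fb r0 r.+1 + Pt r0 r.+1 <= 2 * Pt r0 r.
Proof.
have M1 : 0 < 2 ^ r0 by rewrite expn_gt0.
case: (ltngtP r r0) => H.
- rewrite Fb_low // /Pt.
  have -> : r.+1 <= r0 by [].
  rewrite (ltnW H) expnS; nia.
  have := odd_double_half (r - r0).
  case Ho: (odd (r - r0)) => Hd; rewrite /= in Hd.
  +
    set k' := (r - r0)./2 in Hd.
    have Er : r = r0 + k'.*2.+1 by lia.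
    have Er1 : r.+1 = r0 + k'.+1.*2 by rewrite Er doubleS !addnS.
    have [A _] := Fb_high r0 k'.+1.
    rewrite Er1 Pt_hi // odd_double doubleK Er Pt_hi // O1 H1.
    move: A. rewrite expnS. nia.
  + set k' := (r - r0)./2 in Hd.
    have Er : r = r0 + k'.*2 by lia.
    have Hk0 : 0 < k' by lia.
    have [_ A] := Fb_high r0 k'.
    rewrite Er -addnS Pt_hi // O1 H1 Pt_hi; last by lia.
    rewrite odd_double doubleK. rewrite addnS. move: A. rewrite expnS. nia.
- subst r.
  have [_ A] := Fb_high r0 0.
  rewrite addn0 in A.
  rewrite /Pt leqnn subSn // subnn ltnn.
  have -> : 2 ^ 1./2 = 1 by []. have -> : (if odd 1 then 4 else 3) = 4 by [].
  rewrite expn1 in A; nia.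
Qed.

Lemma created_len_mono r0 r' m1 m2 : m1 <= m2 -> created_len r0 r' m1 <= created_len r0 r' m2.
Proof. move=> H; rewrite /created_len; case: ifP => _ //; exact: half_leq. Qed.

Lemma inv_exec r0 s N C : exec r0 s N C ->
  all (fun e : nat * nat => e.2 <= Fb r0 e.1) s /\
  C + \sum_(e <- s) Pt r0 e.1 <= (r0 + 7) * N.
Proof.
elim => [|{}s t {}N {}C n c _ [Ha Hs] st]; first by rewrite big_nil.
case: st Ha Hs => {t n c}.
- move=> s0 Ha Hs; rewrite /= Ha big_cons.
  have -> : Pt r0 (0, 1).1 = r0 + 6 by rewrite /Pt /= expn0 subn0 mul1n.
  split => //; lia.
- move=> s0 rest r l1 l2 Hp Ha Hs.
  rewrite (perm_all _ Hp) /= in Ha. case/and3P: Ha => H1 H2 Ha.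
  rewrite (perm_big _ Hp) !big_cons /= in Hs.
  have Hc : created_len r0 r.+1 (l1 + l2) <= Fb r0 r.+1.
    rewrite /=; apply: created_len_mono; lia.
  rewrite /= Ha big_cons /=; split; first by rewrite Hc.
  have := key r0 r; lia.
- move=> s0 rest r l Hp Ha Hs.
  rewrite (perm_all _ Hp) /= in Ha. case/andP: Ha => H1 Ha.
  rewrite (perm_big _ Hp) !big_cons /= in Hs.
  case: (l == 0); first by split => //; lia.
  rewrite /= Ha big_cons /=; split; [lia | lia].
Qed.
From Stdlib Require Import Reals Lra ZArith Lia.
From mathcomp Require Import all_boot.
Local Open Scope R_scope.

Lemma r0_bound eps : Rlt 0 eps -> Rlt eps 1 ->
  Rle (INR (r0_of eps)) (Rplus (lg (Rinv eps)) 1).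
Proof.
move=> H0 H1; rewrite /r0_of /ceilR.
set x := lg (Rinv eps).
have [B1 B2] := base_Int_part (Ropp x).
set z := (- Int_part (- x))%Z.
have Hz : Rlt (IZR z) (Rplus x 1) by rewrite /z opp_IZR; lra.
case: (Z_le_gt_dec 0 z) => Hz0.
- by rewrite INR_IZR_INZ Z2Nat.id //; lra.
- have -> : Z.to_nat z = 0%N by lia.
  have : Rlt 0 x.
    rewrite /x /lg; apply: Rdiv_lt_0_compat; rewrite -ln_1; apply: ln_increasing; try lra.
    apply: (Rmult_lt_reg_l eps); first lra.
    rewrite Rinv_r; lra.
  simpl; lra.
Qed.

Lemma lg_pos eps : Rlt 0 eps -> Rlt eps 1 -> Rlt 0 (lg (Rinv eps)).
Proof.
move=> H0 H1; rewrite /lg; apply: Rdiv_lt_0_compat; rewrite -ln_1; apply: ln_increasing; try lra.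
apply: (Rmult_lt_reg_l eps); first lra.
rewrite Rinv_r; lra.
Qed.

Lemma lg_ge1 eps : Rlt 0 eps -> Rle eps (Rinv 2) -> Rle 1 (lg (Rinv eps)).
Proof.
move=> H0 H1.
have L2 : Rlt 0 (ln 2) by rewrite -ln_1; apply: ln_increasing; lra.
have Hi : Rle 2 (Rinv eps).
  apply: (Rmult_le_reg_l eps); first lra.
  rewrite Rinv_r; try lra.
have : Rle (ln 2) (ln (Rinv eps)).
  case: (Rle_lt_or_eq_dec _ _ Hi) => h; last by rewrite h; lra.
  left; apply: ln_increasing; lra.
move=> h; rewrite /lg /Rdiv.
apply: (Rmult_le_reg_r (ln 2)); first lra.
rewrite Rmult_assoc Rinv_l; lra.
Qed.

Theorem lemma4 :
  exists K : R,
    forall eps : R, Rlt 0 eps -> Rlt eps 1 ->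
    forall (s : pool) (N C : nat), exec (r0_of eps) s N C ->
      Rle (INR C) (Rmult (Rmult K (INR N)) (Rplus 1 (lg (Rinv eps)))) /\
      (Rle eps (Rinv 2) ->
       Rle (INR C) (Rmult (Rmult K (INR N)) (lg (Rinv eps)))).
Proof.
exists 16 => eps H0 H1 s N C He.
have [_ Hc] := inv_exec He.
have Hc' : (C <= (r0_of eps + 7) * N)%N by apply: leq_trans Hc; apply: leq_addr.
have HR : Rle (INR C) ((INR (r0_of eps) + 7) * INR N).
  have -> : ((INR (r0_of eps) + 7) * INR N) = INR ((r0_of eps + 7) * N).
    by rewrite mult_INR plus_INR; simpl; lra.
  by apply: le_INR; apply/leP.
have Hr := @r0_bound eps H0 H1.
have Hp := @lg_pos eps H0 H1.
have HN := pos_INR N.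
split; first nra.
move=> H2; have := @lg_ge1 eps H0 H2; nra.
Qed.
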